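(* Let $W$ and $\pi$ be as in the context. There exist constants $D>0$ and $\zeta\in(0,1)$, depending only on $W$, such that the following holds. Let $\alpha>0$, let $w(0)\in\mathbb R^{nd}$, let $(z(s))_{s\ge0}$ be any sequence in $\mathbb R^{nd}$ with $M:=\sup_{s\ge0}\|\nabla F(z(s))\|<\infty$, and define $w(t+1)=(W\otimes I_d)(w(t)-\alpha\nabla F(z(t)))$ for $t\ge0$. Then for all $t\ge0$, $$\|w(t)-n\pi\otimes\bar w(t)\|\le D\zeta^t\|w(0)\|+\frac{\alpha D\zeta}{1-\zeta}M.$$
   Context: $G=(V,E)$ is a directed graph on $\{1,\dots,n\}$ with a self-loop at every vertex and strongly connected; $d_j=|\{i:(j,i)\in E\}|$, $W_{ij}=1/d_j$ if $(j,i)\in E$ and $0$ otherwise. $\pi\in\mathbb R^n$ is the vector with $W\pi=\pi$, $\pi_i>0$, $\sum_i\pi_i=1$. $f_i:\mathbb R^d\to\mathbb R$ are differentiable and $\nabla F(x)=\mathrm{col}(\nabla f_1(x_1),\dots,\nabla f_n(x_n))$ for $x=\mathrm{col}(x_1,\dots,x_n)\in\mathbb R^{nd}$. $\bar w(t)=\frac1n\sum_iw_i(t)$, $n\pi\otimes\bar w(t)=\mathrm{col}(n\pi_1\bar w(t),\dots,n\pi_n\bar w(t))$, $\otimes$ is the Kronecker product, $\|\cdot\|$ the Euclidean norm. *)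

(* Defs.v *)
From HB Require Import structures.
From mathcomp Require Import all_boot all_order all_algebra.
From mathcomp Require Import all_classical all_reals all_analysis.
Set Implicit Arguments. Unset Strict Implicit. Unset Printing Implicit Defensive.
Import Order.TTheory GRing.Theory Num.Theory.
Local Open Scope ring_scope.

(* Vertices {1..n} are 'I_n; E j i means (j,i) is an edge. *)
Definition outdeg (n : nat) (E : rel 'I_n) (j : 'I_n) : nat := #|[set i | E j i]|.

Definition Wmat (R : realType) (n : nat) (E : rel 'I_n) : 'M[R]_n :=
  \matrix_(i, j) (if E j i then ((outdeg E j)%:R)^-1 else 0).

(* A vector x = col(x_1,...,x_n) in R^{nd} is stored as the n x d matrix whose
   i-th row is x_i.  Euclidean norm of the stacked vector: *)
Definition enorm (R : realType) (n d : nat) (x : 'M[R]_(n, d)) : R :=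
  Num.sqrt (\sum_(i < n) \sum_(k < d) x i k ^+ 2).

Definition grad (R : realType) (d : nat) (f : 'rV[R]_d -> R) (x : 'rV[R]_d) : 'rV[R]_d :=
  \row_(k < d) ('D_(delta_mx 0 k) f x).

Definition gradF (R : realType) (n d : nat) (f : 'I_n -> 'rV[R]_d -> R)
  (x : 'M[R]_(n, d)) : 'M[R]_(n, d) :=
  \matrix_(i, k) (grad (f i) (row i x) 0 k).

(* (W (x) I_d) x, with x stacked as above: the i-th block is sum_j W_ij x_j *)
Definition kronI (R : realType) (n d : nat) (W : 'M[R]_n) (x : 'M[R]_(n, d)) : 'M[R]_(n, d) :=
  W *m x.

Definition avg (R : realType) (n d : nat) (x : 'M[R]_(n, d)) : 'rV[R]_d :=
  (n%:R)^-1 *: \sum_(i < n) row i x.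

Definition npi_kron (R : realType) (n d : nat) (pi : 'I_n -> R) (x : 'M[R]_(n, d)) : 'M[R]_(n, d) :=
  \matrix_(i, k) (n%:R * pi i * avg x 0 k).

(* Main.v *)
Require Import Defs.
From HB Require Import structures.
From mathcomp Require Import all_boot all_order all_algebra.
From mathcomp Require Import all_classical all_reals all_analysis.
From mathcomp Require Import ring lra.
Import Order.TTheory GRing.Theory Num.Theory.
Local Open Scope classical_set_scope.
Local Open Scope ring_scope.

Set Implicit Arguments. Unset Strict Implicit.

Lemma sum_ge_term (R : realType) (I : finType) (F : I -> R) (l : I) :
  (forall i, 0 <= F i) -> F l <= \sum_i F i.
Proof. by move=> H; rewrite (bigD1 l) //= lerDl sumr_ge0. Qed.

Lemma prod_le_term (R : realType) (I : finType) (F : I -> R) (l : I) :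
  (forall i, 0 <= F i <= 1) -> \prod_i F i <= F l.
Proof.
move=> H; rewrite (bigD1 l) //=.
have /andP[h0 h1] := H l.
by rewrite ler_piMr //; apply: prodr_ile1 => i _; apply: H.
Qed.

Lemma bernoulli (R : realType) (x : R) (k : nat) :
  0 <= x <= 1 -> 1 - k%:R * x <= (1 - x) ^+ k.
Proof.
move=> /andP[h0 h1]; elim: k => [|k IH]; first by rewrite mul0r subr0 expr0.
rewrite exprS.
have h2 : 0 <= 1 - x by rewrite subr_ge0.
apply: le_trans (ler_wpM2l h2 IH).
have hk : (0:R) <= k%:R by [].
rewrite -natr1; nra.
Qed.

Lemma cauchy_schwarz (R : realType) (I : finType) (a b : I -> R) :
  (\sum_i a i * b i) ^+ 2 <= (\sum_i a i ^+ 2) * (\sum_i b i ^+ 2).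
Proof.
set A := \sum_i a i ^+ 2; set B := \sum_i b i ^+ 2; set C := \sum_i a i * b i.
have H0 : 0 <= \sum_i \sum_j (a i * b j - a j * b i) ^+ 2.
  by apply: sumr_ge0 => i _; apply: sumr_ge0 => j _; apply: sqr_ge0.
have HE : \sum_i \sum_j (a i * b j - a j * b i) ^+ 2 = A * B + A * B - 2 * (C * C).
  have e1 : A * B = \sum_i \sum_j (a i ^+ 2 * b j ^+ 2).
    rewrite /A mulr_suml; apply: eq_bigr => i _; by rewrite mulr_sumr.
  have e2 : A * B = \sum_i \sum_j (a j ^+ 2 * b i ^+ 2).
    rewrite mulrC /B mulr_suml; apply: eq_bigr => i _.
    rewrite mulr_sumr; apply: eq_bigr => j _; by rewrite mulrC.
  have e3 : C * C = \sum_i \sum_j ((a i * b i) * (a j * b j)).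
    rewrite /C mulr_suml; apply: eq_bigr => i _; by rewrite mulr_sumr.
  rewrite {1}e1 {}e2 {}e3 mulr_sumr -big_split -sumrB /=.
  apply: eq_bigr => i _; rewrite mulr_sumr -big_split -sumrB /=.
  apply: eq_bigr => j _; ring.
rewrite HE in H0.
rewrite expr2; nra.
Qed.

Definition sqn (R : realType) (n d : nat) (x : 'M[R]_(n, d)) : R :=
  \sum_(i < n) \sum_(k < d) x i k ^+ 2.

Definition N1 (R : realType) (n d : nat) (x : 'M[R]_(n, d)) : R :=
  \sum_(i < n) \sum_(k < d) `|x i k|.

Lemma sqn_ge0 (R : realType) (n d : nat) (x : 'M[R]_(n, d)) : 0 <= sqn x.
Proof. by apply: sumr_ge0 => i _; apply: sumr_ge0 => k _; apply: sqr_ge0. Qed.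

Lemma N1_ge0 (R : realType) (n d : nat) (x : 'M[R]_(n, d)) : 0 <= N1 x.
Proof. by apply: sumr_ge0 => i _; apply: sumr_ge0 => k _. Qed.

Lemma enorm_ge0 (R : realType) (n d : nat) (x : 'M[R]_(n, d)) : 0 <= enorm x.
Proof. exact: sqrtr_ge0. Qed.

Lemma enormE (R : realType) (n d : nat) (x : 'M[R]_(n, d)) : enorm x = Num.sqrt (sqn x).
Proof. by []. Qed.

Lemma dbl_pair (R : realType) (n d : nat) (F : 'I_n -> 'I_d -> R) :
  \sum_(i < n) \sum_(k < d) F i k = \sum_(p : 'I_n * 'I_d) F p.1 p.2.
Proof. exact: pair_bigA. Qed.

Lemma enormD (R : realType) (n d : nat) (x y : 'M[R]_(n, d)) :
  enorm (x + y) <= enorm x + enorm y.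
Proof.
rewrite !enormE.
have hx := sqn_ge0 x; have hy := sqn_ge0 y.
have sx := sqrtr_ge0 (sqn x); have sy := sqrtr_ge0 (sqn y).
have CS : \sum_(i < n) \sum_(k < d) x i k * y i k <= Num.sqrt (sqn x) * Num.sqrt (sqn y).
  set C := \sum_(i < n) \sum_(k < d) x i k * y i k.
  have h : C ^+ 2 <= sqn x * sqn y.
    rewrite /C /sqn !dbl_pair.
    exact: (cauchy_schwarz (fun p : 'I_n * 'I_d => x p.1 p.2) (fun p => y p.1 p.2)).
  have h2 : C ^+ 2 <= (Num.sqrt (sqn x) * Num.sqrt (sqn y)) ^+ 2.
    by rewrite exprMn !sqr_sqrtr.
  have h3 : 0 <= Num.sqrt (sqn x) * Num.sqrt (sqn y) by apply: mulr_ge0.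
  case: (lerP C 0) => hC; first exact: le_trans hC h3.
  by rewrite -(ler_pXn2r (n:=2)) // ?nnegrE ?ltW.
have E : sqn (x + y) = sqn x + 2 * (\sum_(i < n) \sum_(k < d) x i k * y i k) + sqn y.
  rewrite /sqn mulr_sumr -!big_split /=; apply: eq_bigr => i _.
  rewrite mulr_sumr -!big_split /=; apply: eq_bigr => k _.
  rewrite mxE; ring.
rewrite -(ler_pXn2r (n:=2)) ?nnegrE ?sqrtr_ge0 ?addr_ge0 //.
rewrite sqr_sqrtr ?sqn_ge0 // E.
have -> : (Num.sqrt (sqn x) + Num.sqrt (sqn y)) ^+ 2 =
  Num.sqrt (sqn x) ^+ 2 + 2 * (Num.sqrt (sqn x) * Num.sqrt (sqn y)) + Num.sqrt (sqn y) ^+ 2 by ring.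
rewrite !sqr_sqrtr //; lra.
Qed.

Lemma enormZ (R : realType) (n d : nat) (c : R) (x : 'M[R]_(n, d)) :
  enorm (c *: x) = `|c| * enorm x.
Proof.
rewrite !enormE.
have -> : sqn (c *: x) = c ^+ 2 * sqn x.
  rewrite /sqn mulr_sumr; apply: eq_bigr => i _.
  rewrite mulr_sumr; apply: eq_bigr => k _; rewrite mxE; ring.
by rewrite sqrtrM ?sqr_ge0 // sqrtr_sqr.
Qed.

Lemma enormB (R : realType) (n d : nat) (x y : 'M[R]_(n, d)) :
  enorm (x - y) <= enorm x + enorm y.
Proof.
apply: le_trans (enormD _ _) _.
by rewrite -scaleN1r enormZ normrN normr1 mul1r.
Qed.

Lemma enorm_sum (R : realType) (n d : nat) (t : nat) (X : 'I_t -> 'M[R]_(n, d)) :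
  enorm (\sum_(s < t) X s) <= \sum_(s < t) enorm (X s).
Proof.
apply: (big_ind2 (fun a b => enorm a <= b)).
- by rewrite enormE /sqn big1 ?sqrtr0 // => i _; rewrite big1 // => k _; rewrite mxE expr0n.
- by move=> a1 b1 a2 b2 h1 h2; apply: le_trans (enormD _ _) (lerD h1 h2).
- by [].
Qed.

Lemma sq_le_N1 (R : realType) (n : nat) (A : 'M[R]_n) :
  \sum_(i < n) \sum_(j < n) A i j ^+ 2 <= N1 A ^+ 2.
Proof.
have hle : forall i j, `|A i j| <= N1 A.
  move=> i j.
  have h1 := @sum_ge_term _ _ (fun j => `|A i j|) j (fun _ => normr_ge0 _).
  have h2 := @sum_ge_term _ _ (fun i => \sum_(j < n) `|A i j|) i
     (fun i => sumr_ge0 _ (fun j _ => normr_ge0 (A i j))).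
  exact: le_trans h1 h2.
apply: le_trans (_ : \sum_(i < n) \sum_(j < n) `|A i j| * N1 A <= _).
  apply: ler_sum => i _; apply: ler_sum => j _.
  by rewrite -(ger0_norm (sqr_ge0 (A i j))) normrX expr2 ler_wpM2l.
by rewrite expr2 {3}/N1 mulr_suml; apply: ler_sum => i _; rewrite mulr_suml.
Qed.

Lemma enorm_mul (R : realType) (n d : nat) (A : 'M[R]_n) (x : 'M[R]_(n, d)) :
  enorm (A *m x) <= N1 A * enorm x.
Proof.
rewrite !enormE.
have h : sqn (A *m x) <= N1 A ^+ 2 * sqn x.
  apply: le_trans (_ : \sum_(i < n) \sum_(k < d)
     ((\sum_(j < n) A i j ^+ 2) * (\sum_(j < n) x j k ^+ 2)) <= _).
    apply: ler_sum => i _; apply: ler_sum => k _; rewrite mxE.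
    exact: cauchy_schwarz.
  have -> : \sum_(i < n) \sum_(k < d) ((\sum_(j < n) A i j ^+ 2) * (\sum_(j < n) x j k ^+ 2))
      = (\sum_(i < n) \sum_(j < n) A i j ^+ 2) * sqn x.
    rewrite mulr_suml; apply: eq_bigr => i _; rewrite -mulr_sumr; congr (_ * _).
    by rewrite /sqn exchange_big.
  by apply: ler_wpM2r; [exact: sqn_ge0 | exact: sq_le_N1].
apply: le_trans (ler_wsqrtr h) _.
by rewrite sqrtrM ?sqr_ge0 // sqrtr_sqr ger0_norm ?N1_ge0.
Qed.

Definition colsum0 (R : realType) (n p : nat) (Y : 'M[R]_(n, p)) :=
  forall k, \sum_(i < n) Y i k = 0.

Lemma colsum_mul (R : realType) (n p : nat) (A : 'M[R]_n) (Y : 'M[R]_(n, p)) k :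
  \sum_(i < n) (A *m Y) i k = \sum_(j < n) (\sum_(i < n) A i j) * Y j k.
Proof.
under eq_bigr do rewrite mxE.
rewrite exchange_big /=; apply: eq_bigr => j _; by rewrite mulr_suml.
Qed.

Lemma colsum0_mul (R : realType) (n p : nat) (A : 'M[R]_n) (Y : 'M[R]_(n, p)) :
  (forall j, \sum_(i < n) A i j = 1) -> colsum0 Y -> colsum0 (A *m Y).
Proof.
move=> hA hY k; rewrite colsum_mul; under eq_bigr do rewrite hA mul1r; exact: hY.
Qed.

Lemma contr (R : realType) (n p : nat) (A : 'M[R]_n) (Y : 'M[R]_(n, p)) (dl : R) :
  (forall i j, dl <= A i j) -> (forall j, \sum_(i < n) A i j = 1) -> colsum0 Y ->
  N1 (A *m Y) <= (1 - n%:R * dl) * N1 Y.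
Proof.
move=> hd hA hY.
apply: le_trans (_ : \sum_(i < n) \sum_(k < p) \sum_(j < n) (A i j - dl) * `|Y j k| <= _).
  apply: ler_sum => i _; apply: ler_sum => k _.
  have -> : (A *m Y) i k = \sum_(j < n) (A i j - dl) * Y j k.
    rewrite mxE; under [RHS]eq_bigr do rewrite mulrBl.
    by rewrite sumrB -mulr_sumr hY mulr0 subr0.
  apply: le_trans (ler_norm_sum _ _ _) _.
  apply: ler_sum => j _; rewrite normrM ger0_norm // subr_ge0; exact: hd.
rewrite (_ : \sum_(i < n) \sum_(k < p) \sum_(j < n) (A i j - dl) * `|Y j k|
   = \sum_(j < n) \sum_(k < p) (\sum_(i < n) (A i j - dl)) * `|Y j k|).
  rewrite /N1 mulr_sumr le_eqVlt; apply/orP; left; apply/eqP.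
  apply: eq_bigr => j _; rewrite mulr_sumr; apply: eq_bigr => k _; congr (_ * _).
  by rewrite sumrB hA sumr_const card_ord mulr_natl.
rewrite (eq_bigr (fun i => \sum_(j < n) \sum_(k < p) (A i j - dl) * `|Y j k|)); last first.
  by move=> i _; rewrite exchange_big.
rewrite exchange_big /=; apply: eq_bigr => j _.
rewrite exchange_big /=; apply: eq_bigr => k _.
by rewrite mulr_suml.
Qed.

Lemma mulE (R : realType) (n : nat) (A B : 'M[R]_n) : A * B = A *m B.
Proof. by []. Qed.

Lemma W_ge0 (R : realType) (n : nat) (E : rel 'I_n) i j : 0 <= Wmat R E i j.
Proof. by rewrite mxE; case: ifP => // _; rewrite invr_ge0 ler0n. Qed.

Lemma outdeg_gt0 (n : nat) (E : rel 'I_n) j : E j j -> (0 < outdeg E j)%N.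
Proof. by move=> h; apply/card_gt0P; exists j; rewrite inE. Qed.

Lemma W_gt0 (R : realType) (n : nat) (E : rel 'I_n) i j :
  E j j -> E j i -> 0 < Wmat R E i j.
Proof.
move=> hl h; rewrite mxE h invr_gt0 ltr0n; exact: outdeg_gt0.
Qed.

Lemma W_colsum (R : realType) (n : nat) (E : rel 'I_n) j :
  E j j -> \sum_(i < n) Wmat R E i j = 1.
Proof.
move=> hl.
under eq_bigr do rewrite mxE.
rewrite -big_mkcond /= sumr_const.
have -> : #|[pred i | E j i]| = outdeg E j by rewrite /outdeg cardsE.
rewrite -[LHS]mulr_natr mulVf // pnatr_eq0 -lt0n; exact: outdeg_gt0.
Qed.

Lemma pow_stoch (R : realType) (n : nat) (A : 'M[R]_n) :
  (forall i j, 0 <= A i j) -> (forall j, \sum_(i < n) A i j = 1) ->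
  forall k, (forall i j, 0 <= (A ^+ k) i j) /\ (forall j, \sum_(i < n) (A ^+ k) i j = 1).
Proof.
move=> h0 h1; elim=> [|k [IH0 IH1]].
  rewrite expr0; split.
    by move=> i j; rewrite mxE ler0n.
  move=> j; rewrite (bigD1 j) //= big1 ?addr0.
    by rewrite mxE eqxx.
  by move=> i hij; rewrite mxE (negbTE hij).
rewrite exprS mulE; split.
  by move=> i j; rewrite mxE; apply: sumr_ge0 => l _; apply: mulr_ge0.
by move=> j; rewrite colsum_mul; under eq_bigr do rewrite h1 mul1r; exact: IH1.
Qed.

Lemma path_pos (R : realType) (n : nat) (E : rel 'I_n) (p : seq 'I_n) (x : 'I_n) :
  (forall i, E i i) -> path E x p -> 0 < (Wmat R E ^+ size p) (last x p) x.
Proof.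
move=> hl; elim: p x => [|y p IH] x /=.
  by move=> _; rewrite expr0 mxE eqxx ltr01.
move=> /andP[hxy hp].
have [h0 _] := pow_stoch (@W_ge0 R n E) (fun j => W_colsum R (hl j)) (size p).
rewrite exprSr mulE mxE.
apply: lt_le_trans (_ : (Wmat R E ^+ size p) (last y p) y * Wmat R E y x <= _).
  apply: mulr_gt0; first exact: IH.
  exact: W_gt0.
apply: (@sum_ge_term _ _ (fun l => (Wmat R E ^+ size p) (last y p) l * Wmat R E l x) y).
by move=> l; apply: mulr_ge0 => //; exact: W_ge0.
Qed.

Lemma pad_pos (R : realType) (n : nat) (E : rel 'I_n) (i j : 'I_n) (k m : nat) :
  (forall i, E i i) -> (k <= m)%N -> 0 < (Wmat R E ^+ k) i j -> 0 < (Wmat R E ^+ m) i j.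
Proof.
move=> hl /subnK <-; elim: (m - k)%N => [|r IH] h; first by rewrite add0n.
rewrite addSn exprS mulE mxE.
have [h0 _] := pow_stoch (@W_ge0 R n E) (fun j => W_colsum R (hl j)) (r + k).
apply: lt_le_trans (_ : Wmat R E i i * (Wmat R E ^+ (r + k)) i j <= _).
  by apply: mulr_gt0; [exact: W_gt0 | exact: IH].
apply: (@sum_ge_term _ _ (fun l => Wmat R E i l * (Wmat R E ^+ (r + k)) l j) i).
by move=> l; apply: mulr_ge0 => //; exact: W_ge0.
Qed.

Lemma Wn_pos (R : realType) (n : nat) (E : rel 'I_n) :
  (forall i, E i i) -> (forall i j, connect E i j) ->
  forall i j, 0 < (Wmat R E ^+ n) i j.
Proof.
move=> hl hc i j.
have /connectP [p hp hlast] := hc j i.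
rewrite hlast; case: (shortenP hp) => p' hp' hu _.
apply: (@pad_pos R n E _ _ (size p')) => //; last exact: path_pos.
have := max_card (mem (j :: p')).
rewrite card_ord (card_uniqP hu) /=.
by move=> h; apply: ltnW.
Qed.

Lemma decay (R : realType) (n : nat) (E : rel 'I_n) :
  (0 < n)%N -> (forall i, E i i) -> (forall i j, connect E i j) ->
  exists zeta : R, 0 < zeta < 1 /\
   forall (p k : nat) (Y : 'M[R]_(n, p)), colsum0 Y ->
     zeta ^+ n * N1 (Wmat R E ^+ k *m Y) <= zeta ^+ k * N1 Y.
Proof.
move=> n0 hl hc.
set W := Wmat R E.
have hW := pow_stoch (@W_ge0 R n E) (fun j => W_colsum R (hl j)).
set B := W ^+ n.
have hBpos : forall i j, 0 < B i j by exact: Wn_pos.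
have [hB0 hB1] := hW n.
have hB := pow_stoch hB0 hB1.
set dl := \prod_(i < n) \prod_(j < n) B i j.
have Ble1 : forall i j, B i j <= 1.
  move=> i j; rewrite -(hB1 j).
  exact: (@sum_ge_term _ _ (fun i => B i j) i (fun i => hB0 i j)).
have dl_le : forall i j, dl <= B i j.
  move=> i j; apply: le_trans (_ : \prod_(j < n) B i j <= _).
    apply: (@prod_le_term _ _ (fun i => \prod_(j < n) B i j) i) => l.
    apply/andP; split; first by apply: prodr_ge0 => m _.
    by apply: prodr_ile1 => m _; rewrite hB0 Ble1.
  by apply: prod_le_term => m; rewrite hB0 Ble1.
have dl_gt0 : 0 < dl.
  by apply: prodr_gt0 => i _; apply: prodr_gt0 => j _.
set j0 := Ordinal n0.
have ndl_le1 : n%:R * dl <= 1.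
  have : \sum_(i < n) dl <= \sum_(i < n) B i j0 by apply: ler_sum => i _.
  by rewrite hB1 sumr_const card_ord mulr_natl.
have dl_le1 : dl <= 1 by exact: le_trans (dl_le j0 j0) (Ble1 j0 j0).
set q := 1 - n%:R * dl.
set zeta := 1 - dl / 2.
have hq0 : 0 <= q by rewrite subr_ge0.
have hz0 : 0 < zeta by rewrite /zeta; lra.
have hz1 : zeta < 1 by rewrite /zeta; lra.
have hzq : q <= zeta ^+ n.
  have := @bernoulli R (dl / 2) n.
  have hn : (0:R) <= n%:R by [].
  rewrite /zeta /q => h; apply: le_trans (h _).
    nra.
  apply/andP; split; lra.
exists zeta; split; first by rewrite hz0 hz1.
have nonexp : forall p r (Z : 'M[R]_(n, p)), colsum0 Z -> N1 (W ^+ r *m Z) <= N1 Z.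
  move=> p r Z hZ; have [h0 h1] := hW r.
  have := contr (dl := 0) h0 h1 hZ.
  by rewrite mulr0 subr0 mul1r; apply.
have Ba : forall p a (Y : 'M[R]_(n, p)), colsum0 Y -> N1 (B ^+ a *m Y) <= q ^+ a * N1 Y.
  move=> p; elim=> [|a IH] Y hY; first by rewrite expr0 mul1mx expr0 mul1r.
  rewrite exprS mulE -mulmxA.
  have [h0 h1] := hB a.
  have hc0 := colsum0_mul h1 hY.
  apply: le_trans (contr dl_le hB1 hc0) _.
  rewrite -/q exprS -mulrA; apply: ler_wpM2l => //; exact: IH.
move=> p k Y hY.
have hk : k = (k %% n + n * (k %/ n))%N by rewrite mulnC addnC -divn_eq.
rewrite {1}hk exprD exprM -/B mulE -mulmxA.
have [h0 h1] := hB (k %/ n)%N.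
apply: le_trans (_ : zeta ^+ n * (q ^+ (k %/ n)%N * N1 Y) <= _).
  apply: ler_wpM2l; first by rewrite exprn_ge0 // ltW.
  apply: le_trans (nonexp _ _ _ (colsum0_mul h1 hY)) _.
  exact: Ba.
rewrite mulrA; apply: ler_wpM2r; first exact: N1_ge0.
apply: le_trans (_ : zeta ^+ n * zeta ^+ (n * (k %/ n))%N <= _).
  apply: ler_wpM2l; first by rewrite exprn_ge0 // ltW.
  rewrite exprM; apply: lerXn2r => //; rewrite nnegrE //; exact: exprn_ge0 (ltW hz0).
rewrite -exprD; apply: ler_wiXn2l; [exact: ltW | exact: ltW |].
rewrite {1}hk leq_add2r; apply: ltnW; exact: ltn_pmod.
Qed.

Lemma geo (R : realType) (zeta : R) (t : nat) : 0 <= zeta < 1 ->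
  \sum_(s < t) zeta ^+ (t - s) <= zeta / (1 - zeta).
Proof.
move=> /andP[h0 h1].
have hr : zeta / (1 - zeta) * (1 - zeta) = zeta by rewrite mulfVK // subr_eq0 gt_eqF.
have hr0 : 0 <= zeta / (1 - zeta) by rewrite divr_ge0 // subr_ge0 ltW.
elim: t => [|t IH]; first by rewrite big_ord0.
rewrite big_ord_recr /= subSnn expr1.
have -> : \sum_(s < t) zeta ^+ (t.+1 - s) = zeta * \sum_(s < t) zeta ^+ (t - s).
  rewrite mulr_sumr; apply: eq_bigr => s _.
  by rewrite subSn ?exprS // ltnW.
move: IH; set X := \sum_(s < t) _ => IH.
nra.
Qed.

Lemma unroll (R : realType) (n d : nat) (W : 'M[R]_n) (alpha : R)
  (w g : nat -> 'M[R]_(n, d)) :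
  (forall t, w t.+1 = W *m (w t - alpha *: g t)) ->
  forall t, w t = W ^+ t *m w 0%N - alpha *: \sum_(s < t) (W ^+ (t - s) *m g s).
Proof.
move=> hrec; elim=> [|t IH]; first by rewrite big_ord0 scaler0 subr0 expr0 mul1mx.
rewrite hrec IH big_ord_recr /= subSnn expr1.
have -> : \sum_(s < t) W ^+ (t.+1 - s) *m g s = W *m \sum_(s < t) (W ^+ (t - s) *m g s).
  rewrite mulmx_sumr; apply: eq_bigr => s _.
  by rewrite subSn ?exprS ?mulE ?mulmxA // ltnW.
rewrite !mulmxBr -!scalemxAr exprS mulE mulmxA scalerDr opprD addrA.
reflexivity.
Qed.
Unset Implicit Arguments. Set Strict Implicit.

Lemma rearr (V : zmodType) (a s1 p s2 : V) : a - s1 - (p - s2) = a - p - (s1 - s2).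
Proof. rewrite !opprB !addrA -!addrA; congr (_ + _); rewrite addrCA [RHS]addrCA; congr (_ + _); exact: addrC. Qed.

Theorem lemma3p1 (R : realType) (n : nat) (E : rel 'I_n) (pi : 'I_n -> R)
  (Hloop : forall i, E i i)
  (Hsc : forall i j, connect E i j)
  (Hpi_fix : forall i, \sum_(j < n) Wmat R E i j * pi j = pi i)
  (Hpi_pos : forall i, 0 < pi i)
  (Hpi_sum : \sum_(i < n) pi i = 1) :
  exists (D zeta : R), 0 < D /\ 0 < zeta < 1 /\
  forall (d : nat) (f : 'I_n -> 'rV[R]_d -> R),
    (forall i x, differentiable (f i) x) ->
  forall (alpha : R) (w z : nat -> 'M[R]_(n, d)),
    0 < alpha ->
    has_ubound [set enorm (gradF f (z s)) | s in [set: nat]] ->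
    (forall t, w t.+1 = kronI (Wmat R E) (w t - alpha *: gradF f (z t))) ->
  forall t : nat,
    enorm (w t - npi_kron pi (w t))
      <= D * zeta ^+ t * enorm (w 0%N)
         + alpha * D * zeta / (1 - zeta) * sup [set enorm (gradF f (z s)) | s in [set: nat]].
Proof.
have n0 : (0 < n)%N.
  case: (posnP n) => // h0; exfalso.
  move: Hpi_sum; rewrite big1; last by move=> i _; have := ltn_ord i; rewrite {2}h0 ltn0.
  by move/eqP; rewrite eq_sym oner_eq0.
have hn : n%:R != 0 :> R by rewrite pnatr_eq0 -lt0n.
have [zeta [/andP[hz0 hz1] hdec]] := decay R n0 Hloop Hsc.
set W := Wmat R E.
set P : 'M[R]_n := \matrix_(i, j) pi i.
have hW := pow_stoch (@W_ge0 R n E) (fun j => W_colsum R (Hloop j)).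
have WP : forall k, W ^+ k *m P = P.
  elim=> [|k IH]; first by rewrite expr0 mul1mx.
  rewrite exprS mulE -mulmxA IH; apply/matrixP => i j; rewrite !mxE.
  rewrite -[RHS]Hpi_fix; apply: eq_bigr => l _; by rewrite ?mxE.
have PW : forall k, P *m W ^+ k = P.
  move=> k; have [_ h1] := hW k; apply/matrixP => i j; rewrite !mxE.
  under eq_bigr do rewrite mxE.
  by rewrite -mulr_sumr h1 mulr1.
have npiE : forall d (x : 'M[R]_(n, d)), npi_kron pi x = P *m x.
  move=> d x; apply/matrixP => i k; rewrite !mxE /avg summxE.
  under eq_bigr do rewrite mxE.
  under [in RHS]eq_bigr do rewrite mxE.
  rewrite -mulr_sumr; by field.

have Dpos : 0 < n%:R ^+ 2 / zeta ^+ n.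
  by rewrite divr_gt0 // exprn_gt0 // ltr0n.
set D := n%:R ^+ 2 / zeta ^+ n.
have hc : colsum0 (1%:M - P).
  move=> j; under eq_bigr do rewrite !mxE.
  rewrite sumrB Hpi_sum (bigD1 j) //= eqxx big1 ?addr0 ?subrr //.
  by move=> i hij; rewrite (negbTE hij).
have hN1 : N1 (1%:M - P) <= n%:R ^+ 2.
  rewrite /N1; apply: le_trans (_ : \sum_(i < n) \sum_(j < n) (1:R) <= _).
    apply: ler_sum => i _; apply: ler_sum => j _; rewrite !mxE.
    have hp := Hpi_pos i.
    have hp1 : pi i <= 1.
      rewrite -Hpi_sum.
      exact: (@sum_ge_term _ _ pi i (fun i => ltW (Hpi_pos i))).
    case: (i == j) => /=; rewrite ?mulr1n ?mulr0n ler_norml; apply/andP; split; lra.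
  rewrite !sumr_const !card_ord -mulrnA expr2 -natrM; by [].
have key : forall d k (x : 'M[R]_(n, d)), enorm ((W ^+ k - P) *m x) <= D * zeta ^+ k * enorm x.
  move=> d k x.
  have -> : W ^+ k - P = W ^+ k *m (1%:M - P) by rewrite mulmxBr mulmx1 WP.
  apply: le_trans (enorm_mul _ _) _.
  rewrite ler_wpM2r ?enorm_ge0 //.
  have h := hdec n k _ hc.
  rewrite -(ler_pM2l (exprn_gt0 n hz0)).
  apply: le_trans h _.
  have -> : zeta ^+ n * (D * zeta ^+ k) = zeta ^+ k * n%:R ^+ 2.
    rewrite /D; field; by rewrite expf_neq0 // gt_eqF.
  by rewrite ler_wpM2l // exprn_ge0 // ltW.
exists D, zeta; split; first exact: Dpos.
split; first by rewrite hz0 hz1.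
move=> d f _ alpha w z ha hub hrec t.
set g := fun s => gradF f (z s).
set M := sup _.
have hg : forall s, enorm (g s) <= M.
  by move=> s; apply: (ub_le_sup hub); exists s.
have M0 : 0 <= M := le_trans (enorm_ge0 _) (hg 0%N).
have hrec' : forall t, w t.+1 = W *m (w t - alpha *: g t) by move=> s; rewrite hrec.
have hw := unroll hrec'.
have He : w t - npi_kron pi (w t) =
    (W ^+ t - P) *m w 0%N - alpha *: \sum_(s < t) ((W ^+ (t - s) - P) *m g s).
  rewrite npiE (hw t) mulmxBr -scalemxAr mulmx_sumr mulmxA PW.
  have -> : \sum_(i < t) P *m (W ^+ (t - i) *m g i) = \sum_(i < t) P *m g i.
    by apply: eq_bigr => i _; rewrite mulmxA PW.
  rewrite mulmxBl.
  under [in RHS]eq_bigr do rewrite mulmxBl.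
  by rewrite sumrB scalerBr rearr.
rewrite He.
apply: le_trans (enormB _ _) _.
rewrite enormZ (ger0_norm (ltW ha)).
have D0 : 0 <= D := ltW Dpos.
apply: lerD; first exact: key.
apply: le_trans (_ : alpha * (D * M * (zeta / (1 - zeta))) <= _); last first.
  rewrite le_eqVlt; apply/orP; left; apply/eqP; rewrite /D; ring.
rewrite ler_pM2l //.
apply: le_trans (enorm_sum _) _.
apply: le_trans (_ : \sum_(s < t) D * M * zeta ^+ (t - s) <= _).
  apply: ler_sum => s _; apply: le_trans (key _ _ _) _.
  rewrite [D * M * _]mulrAC; apply: ler_wpM2l; last exact: hg.
  by rewrite mulr_ge0 // exprn_ge0 // ltW.
rewrite -mulr_sumr; apply: ler_wpM2l; first exact: mulr_ge0.
by apply: geo; rewrite ltW.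
Qed.
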